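(* Let $q$ be a prime power. Each of the following sets $\mathcal{S}$ is an optimal $(1,\mu)$-saturating set in $PG(2,q)$, with the stated size and $\mu$: (i) $\mathcal{S}$ is the union of $L$ distinct lines through a common point, where $2\le L\le q$; then $|\mathcal{S}|=1+Lq$ and $\mu=\binom{L}{2}q$. (ii) $\mathcal{S}$ is the union of $q$ distinct lines through a common point $G$ together with $b$ points, different from $G$, of the remaining $(q+1)$-th line through $G$, where $1\le b\le q-1$; then $|\mathcal{S}|=1+q^2+b$ and $\mu=\binom{b+1}{2}+\binom{q}{2}q$. (iii) $\mathcal{S}$ is a triangle, i.e. the union of three lines not through a common point; then $|\mathcal{S}|=3q$ and $\mu=3+(q-2)\binom{3}{2}=3(q-1)$. (iv) $\mathcal{S}=PG(2,q)\setminus T$, where $T$ is a vertex-less triangle, i.e. the union of three lines not through a common point with their three pairwise intersection points removed; then $|\mathcal{S}|=q^2-2q+4$ and $\mu=1+\binom{q}{2}+(q-1)\binom{q-2}{2}$.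
   Context: $PG(2,q)$ is the projective plane over $\mathbb{F}_q$. For a point set $\mathcal{S}$, a secant of $\mathcal{S}$ is a line $\ell$ with $|\ell\cap \mathcal{S}|\ge2$, counted with multiplicity $\binom{|\ell\cap \mathcal{S}|}{2}$. A set $\mathcal{S}$ of points of $PG(2,q)$ is $(1,\mu)$-saturating if (M1) $\mathcal{S}$ spans $PG(2,q)$, (M2) $\mathcal{S}\neq PG(2,q)$, and (M3) every point not in $\mathcal{S}$ lies on secants of $\mathcal{S}$ whose multiplicities sum to at least $\mu$; it is optimal if for every point not in $\mathcal{S}$ this sum is exactly $\mu$. *)

(* Defs.v *)
From HB Require Import structures.
From mathcomp Require Import all_boot all_order all_algebra.
Set Implicit Arguments. Unset Strict Implicit. Unset Printing Implicit Defensive.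
Import GRing.Theory.
Local Open Scope ring_scope.

(* A point is represented by its unique normalized homogeneous coordinate
   vector: a nonzero vector of F^3 whose first nonzero coordinate is 1.
   Lines are represented in the same way by their dual coordinates. *)

Definition normalized (F : fieldType) (v : 'rV[F]_3) : bool :=
  [exists i : 'I_3, (v 0 i == 1) && [forall j : 'I_3, (j < i)%N ==> (v 0 j == 0)]].

Notation point F := {v : 'rV[F]_3 | normalized v}.
Notation line F := {v : 'rV[F]_3 | normalized v}.

Definition inc (F : finFieldType) (x : point F) (l : line F) : bool :=
  \sum_(i < 3) (val x) 0 i * (val l) 0 i == 0.

Definition pts (F : finFieldType) (l : line F) : {set point F} :=
  [set x | inc x l].

Definition secant_mult (F : finFieldType) (S : {set point F}) (x : point F) : nat :=
  \sum_(l : line F | inc x l) 'C(#|S :&: pts l|, 2).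

Definition spans (F : finFieldType) (S : {set point F}) : bool :=
  \rank (\sum_(p in S) <<val p>>)%MS == 3.

Definition saturating (F : finFieldType) (mu : nat) (S : {set point F}) : Prop :=
  [/\ spans S, S != [set: point F] &
      forall x : point F, x \notin S -> (mu <= secant_mult S x)%N].

Definition optimal_saturating (F : finFieldType) (mu : nat) (S : {set point F}) : Prop :=
  saturating mu S /\ forall x : point F, x \notin S -> secant_mult S x = mu.

Definition union_lines (F : finFieldType) (Ls : {set line F}) : {set point F} :=
  \bigcup_(l in Ls) pts l.

Definition nonconcurrent (F : finFieldType) (l1 l2 l3 : line F) : Prop :=
  ~ exists x : point F, [&& inc x l1, inc x l2 & inc x l3].

Definition triangle (F : finFieldType) (l1 l2 l3 : line F) : {set point F} :=
  pts l1 :|: pts l2 :|: pts l3.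

Definition vertexless_triangle (F : finFieldType) (l1 l2 l3 : line F) : {set point F} :=
  triangle l1 l2 l3 :\: ((pts l1 :&: pts l2) :|: (pts l1 :&: pts l3) :|: (pts l2 :&: pts l3)).

(* Main.v *)
Require Import Defs.
From mathcomp Require Import all_boot all_order all_algebra.
Set Implicit Arguments. Unset Strict Implicit. Unset Printing Implicit Defensive.
From mathcomp Require Import zify.
Import GRing.Theory.
Local Open Scope ring_scope.

Section Geo.
Variable F : finFieldType.
Implicit Types (x y l m : point F) (u v : 'rV[F]_3).

Lemma ord3_cases (j : 'I_3) : [\/ j = 0, j = 1 | j = 2%:R].
Proof.
case: j => [[|[|[|?]]] Hj]; [constructor 1|constructor 2|constructor 3|by []];
  by apply/val_inj.
Qed.

Lemma normalized_neq0 u : normalized u -> u != 0.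
Proof.
case/existsP=> i /andP[/eqP Hi _]; apply/eqP=> u0.
by move: Hi; rewrite u0 mxE => /eqP; rewrite eq_sym oner_eq0.
Qed.

Lemma normalized_sub u v : normalized u -> normalized v -> (u <= v)%MS -> u = v.
Proof.
move=> nu nv /sub_rVP[a ua].
case/existsP: nu => i /andP[/eqP ui /forallP ui0].
case/existsP: nv => j /andP[/eqP vj /forallP vj0].
have [ij|ji|ij] := ltngtP i j.
- by move: ui; rewrite ua mxE (eqP (implyP (vj0 i) ij)) mulr0 => /eqP; rewrite eq_sym oner_eq0.
- have uj := eqP (implyP (ui0 j) ji); move: uj; rewrite ua mxE vj mulr1 => a0.
  by move: ui; rewrite ua mxE a0 mul0r => /eqP; rewrite eq_sym oner_eq0.
- have eij : i = j by apply/val_inj.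
  subst j; move: ui; rewrite ua mxE vj mulr1 => a1.
  by rewrite a1 scale1r.
Qed.


Lemma mx11_eq0 (M : 'M[F]_1) : (M == 0) = (M 0 0 == 0).
Proof.
apply/eqP/eqP => [->|H]; first by rewrite mxE.
by apply/matrixP=> i j; rewrite !ord1 H mxE.
Qed.

Lemma inc_mul x l : inc x l = (val x *m (val l)^T == 0).
Proof.
rewrite mx11_eq0 /inc mxE; congr (_ == _); apply: eq_bigr => k _; by rewrite mxE.
Qed.

Lemma inc_sym x l : inc x l = inc l x.
Proof. rewrite /inc; congr (_ == _); apply: eq_bigr => k _; exact: mulrC. Qed.

Lemma rV3_neq0 u : u != 0 -> [|| u 0 0 != 0, u 0 1 != 0 | u 0 2%:R != 0].
Proof.
apply: contraR; rewrite !negb_or !negbK => /and3P[/eqP h0 /eqP h1 /eqP h2].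
apply/eqP/matrixP=> i j; rewrite ord1 mxE.
by case: (ord3_cases j) => ->.
Qed.

Definition nrm u : 'rV[F]_3 :=
  if u 0 0 != 0 then (u 0 0)^-1 *: u else
  if u 0 1 != 0 then (u 0 1)^-1 *: u else (u 0 2%:R)^-1 *: u.

Lemma nrm_scale u : u != 0 -> exists2 c, c != 0 & nrm u = c *: u.
Proof.
move/rV3_neq0; rewrite /nrm.
case: ifP => [h _|_]; first by exists (u 0 0)^-1; rewrite ?invr_eq0.
case: ifP => [h _|_ h]; first by exists (u 0 1)^-1; rewrite ?invr_eq0.
by exists (u 0 2%:R)^-1; rewrite ?invr_eq0.
Qed.

Lemma nrm_normalized u : u != 0 -> normalized (nrm u).
Proof.
move/rV3_neq0; rewrite /nrm.
case: ifP => [h _|/negbFE/eqP h0].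
  apply/existsP; exists 0; rewrite mxE mulVf //= eqxx /=.
  apply/forallP => j; apply/implyP => hj; by have := hj isT.
case: ifP => [h _|/negbFE/eqP h1 /= h].
  apply/existsP; exists 1; rewrite mxE mulVf //= eqxx /=.
  apply/forallP => j; apply/implyP => hj.
  have -> : j = 0 by apply/val_inj; move: hj; rewrite /=; case: (val j).
  by rewrite mxE h0 mulr0.
apply/existsP; exists 2%:R; rewrite mxE mulVf //= eqxx /=.
apply/forallP => j; apply/implyP => hj.
by case: (ord3_cases j) hj => -> // _; rewrite mxE ?h0 ?h1 mulr0.
Qed.

Lemma mk_point u : u != 0 -> exists p : point F, exists2 c, c != 0 & val p = c *: u.
Proof.
move=> u0; exists (Sub (nrm u) (nrm_normalized u0)); rewrite SubK.
exact: nrm_scale.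
Qed.

Lemma exists_orth k (M : 'M[F]_(k, 3)) : (\rank M < 3)%N ->
  exists l : point F, M *m (val l)^T = 0.
Proof.
move=> rM.
set K := kermx M^T.
have K0 : nz_row K != 0.
  rewrite nz_row_eq0 -mxrank_eq0 mxrank_ker mxrank_tr.
  by rewrite subn_eq0 -ltnNge.
have uK' : nz_row K *m M^T = 0 by apply/sub_kermxP; exact: nz_row_sub.
have [l [c c0 lc]] := mk_point K0.
by exists l; apply: trmx_inj; rewrite trmx_mul trmxK trmx0 lc -scalemxAl uK' scaler0.
Qed.

Lemma rank1_eq (a b : point F) n (K : 'M[F]_(n, 3)) :
  (val a <= K)%MS -> (val b <= K)%MS -> (\rank K <= 1)%N -> a = b.
Proof.
move=> aK bK rK.
have ra : \rank (val a) = 1%N by rewrite rank_rV normalized_neq0 //; exact: valP.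
have := mxrank_leqif_eq aK; rewrite ra => /leqifP.
case: ifP => [/andP[_ Ka] _|_]; last by rewrite ltnNge rK.
apply/val_inj/esym/normalized_sub; try exact: valP.
exact: submx_trans bK Ka.
Qed.

Lemma join_ex x y : exists l : point F, inc x l && inc y l.
Proof.
have [l Hl] := @exists_orth _ (col_mx (val x) (val y)) (leq_ltn_trans (rank_leq_row _) (isT : (2 < 3)%N)).
exists l; move: Hl; rewrite !inc_mul mul_col_mx => /eqP; by rewrite col_mx_eq0.
Qed.

Lemma join_uniq x y l m : x != y -> inc x l -> inc y l -> inc x m -> inc y m -> l = m.
Proof.
move=> xy; rewrite !inc_mul => xl yl xm ym.
set N := col_mx (val l) (val m).
have [rN|rN] := leqP (\rank N) 1.
  have := col_mx_sub (val l) (val m) N; rewrite submx_refl => /esym/andP[lN mN].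
  exact: rank1_eq lN mN rN.
have xK : (val x <= kermx N^T)%MS
  by rewrite sub_kermx tr_col_mx mul_mx_row (eqP xl) (eqP xm) row_mx0.
have yK : (val y <= kermx N^T)%MS
  by rewrite sub_kermx tr_col_mx mul_mx_row (eqP yl) (eqP ym) row_mx0.
have rK : (\rank (kermx N^T) <= 1)%N by rewrite mxrank_ker mxrank_tr; lia.
by rewrite (rank1_eq xK yK rK) eqxx in xy.
Qed.

Lemma card_sub_rV n (K : 'M[F]_(n,3)) :
  #|[set u : 'rV[F]_3 | (u <= K)%MS]| = (#|F| ^ \rank K)%N.
Proof.
have -> : [set u : 'rV[F]_3 | (u <= K)%MS] =
          [set w *m row_base K | w in [set: 'rV[F]_(\rank K)]].
  apply/setP => u; rewrite inE; apply/idP/imsetP.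
    rewrite -{1}(eq_row_base K) => /submxP[w ->]; by exists w; rewrite ?inE.
  case=> w _ ->; apply: submx_trans (submxMl w _) _; by rewrite eq_row_base.
rewrite card_in_imset; first by rewrite cardsT card_mx mul1n.
move=> a b _ _; exact: (row_free_inj (row_base_free K)).
Qed.

Lemma card_pts_sub n (K : 'M[F]_(n,3)) :
  (#|[set p : point F | (val p <= K)%MS]| * (#|F| - 1) = #|F| ^ \rank K - 1)%N.
Proof.
set A := [set p : point F | (val p <= K)%MS].
have cC : #|[set~ (0 : F)]| = (#|F| - 1)%N by rewrite cardsC1 subn1.
rewrite -cC -cardsX -card_sub_rV.
have -> : (#|[set u : 'rV[F]_3 | (u <= K)%MS]| - 1)%N =
          #|[set u : 'rV[F]_3 | (u <= K)%MS] :\ 0|.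
  by rewrite (cardsD1 0) inE sub0mx add1n subn1.
rewrite -(@card_in_imset _ _ (fun pc : point F * F => pc.2 *: val pc.1)).
  apply: eq_card => u; rewrite !inE; apply/imsetP/andP.
    case=> [[p c]]; rewrite !inE /= => /andP[pK c0] ->; split; last exact: scalemx_sub.
    by rewrite scaler_eq0 negb_or c0 normalized_neq0 //; exact: valP.
  case=> u0 uK; have [p [c c0 pc]] := mk_point u0.
  exists (p, c^-1); last by rewrite /= pc scalerA mulVf ?scale1r.
  by rewrite !inE /= invr_eq0 c0 andbT pc scalemx_sub.
move=> [p c] [p' c']; rewrite !inE /= => /andP[_ c0] /andP[_ c'0] E.
have pp : p = p'.
  apply/val_inj/normalized_sub; try exact: valP.
  have -> : val p = (c^-1 * c') *: val p' by rewrite -scalerA -E scalerA mulVf ?scale1r.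
  exact: scalemx_sub.
subst p'; congr (_, _); apply/eqP; rewrite -subr_eq0.
have : (c - c') *: val p == 0 by rewrite scalerBl E subrr.
by rewrite scaler_eq0 (negbTE (normalized_neq0 (valP p))) orbF.
Qed.

Lemma q_gt1 : (1 < #|F|)%N.
Proof. exact: card_finNzRing_gt1. Qed.

Lemma card_pts l : #|pts l| = #|F|.+1.
Proof.
have E : pts l = [set p : point F | (val p <= kermx (val l)^T)%MS].
  by apply/setP => p; rewrite !inE inc_mul sub_kermx.
have := card_pts_sub (kermx (val l)^T); rewrite -E mxrank_ker mxrank_tr.
rewrite rank_rV normalized_neq0; last exact: valP.
have := q_gt1; set q := #|F|; set c := #|pts l| => q1 H.
apply/eqP; rewrite -(@eqn_pmul2r (q - 1)); last by lia.
rewrite H; apply/eqP; rewrite !expnS expn0 !muln1; nia.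
Qed.

Lemma card_points : #|[set: point F]| = (#|F| ^ 2 + #|F| + 1)%N.
Proof.
have E : [set: point F] = [set p : point F | (val p <= 1%:M)%MS].
  by apply/setP => p; rewrite !inE submx1.
have := card_pts_sub (1%:M : 'M[F]_3); rewrite -E mxrank1.
have := q_gt1; set q := #|F|; set c := #|_| => q1 H.
apply/eqP; rewrite -(@eqn_pmul2r (q - 1)); last by lia.
rewrite H; apply/eqP; rewrite !expnS expn0 !muln1; nia.
Qed.

Lemma card_pencil x : #|[set l : point F | inc x l]| = #|F|.+1.
Proof.
rewrite -(card_pts x); apply: eq_card => l; by rewrite !inE inc_sym.
Qed.

Definition join x y : point F := odflt x [pick l | inc x l && inc y l].

Lemma join_inc x y : inc x (join x y) && inc y (join x y).
Proof.
rewrite /join; case: pickP => [l //|H].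
by have [l /andP[a b]] := join_ex x y; move: (H l); rewrite a b.
Qed.

Lemma join_incl x y : inc x (join x y). Proof. by case/andP: (join_inc x y). Qed.
Lemma join_incr x y : inc y (join x y). Proof. by case/andP: (join_inc x y). Qed.
Lemma meet_incl l m : inc (join l m) l. Proof. by rewrite inc_sym join_incl. Qed.
Lemma meet_incr l m : inc (join l m) m. Proof. by rewrite inc_sym join_incr. Qed.

Lemma meet_uniq a b l m : l != m -> inc a l -> inc a m -> inc b l -> inc b m -> a = b.
Proof.
move=> lm al am bl bm; apply/eqP; apply: contraR lm => ab.
by apply/eqP; apply: (join_uniq ab) => //.
Qed.

Lemma pencil_sum x (E1 E2 : {set point F}) k1 k2 k (g : point F -> nat) :
  (forall l, l \in E1 -> inc x l) -> (forall l, l \in E2 -> inc x l) ->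
  (forall l, l \in E1 -> l \notin E2) ->
  (forall l, l \in E1 -> g l = k1) -> (forall l, l \in E2 -> g l = k2) ->
  (forall l, inc x l -> l \notin E1 -> l \notin E2 -> g l = k) ->
  (\sum_(l | inc x l) g l = #|E1| * k1 + #|E2| * k2 + (#|F|.+1 - #|E1| - #|E2|) * k)%N.
Proof.
move=> s1 s2 d h1 h2 h.
set P3 := fun l => inc x l && (l \notin E1) && (l \notin E2).
have dec : forall f : point F -> nat, (\sum_(l | inc x l) f l =
   \sum_(l in E1) f l + \sum_(l in E2) f l + \sum_(l | P3 l) f l)%N.
  move=> f; rewrite (bigID (mem E1)) /=.
  rewrite [\sum_(i | inc x i && (i \notin E1)) _](bigID (mem E2)) /= addnA.
  congr (_ + _ + _)%N.
  - by apply: eq_bigl => l; case: (boolP (l \in E1)) => [/s1 ->|]; rewrite ?andbT ?andbF.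
  - apply: eq_bigl => l; case: (boolP (l \in E2)) => [H|]; rewrite ?andbT ?andbF //.
    rewrite s2 //=; case: (boolP (l \in E1)) => // /d; by rewrite H.
have cst : forall c, (\sum_(l | P3 l) c = (\sum_(l | P3 l) 1) * c)%N.
  move=> c; apply: (big_ind2 (fun a b => a = b * c)%N) => //.
  - by move=> a1 b1 a2 b2 -> ->; rewrite mulnDl.
  - by move=> l _; rewrite mul1n.
have c1 := dec (fun _ => 1%N); rewrite !sum1_card in c1.
have e : #|[pred l | inc x l]| = #|F|.+1 by rewrite -(card_pencil x); apply: eq_card => l; rewrite inE.
rewrite dec (eq_bigr (fun _ => k1) h1) (eq_bigr (fun _ => k2) h2).
rewrite [\sum_(l | P3 l) g l](eq_bigr (fun _ => k)); last first.
  by move=> l; rewrite /P3 => /andP[/andP[a b] c]; apply: h.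
rewrite !sum_nat_const; congr (_ + _ + _ * _)%N.
move: c1; rewrite e; lia.
Qed.

Lemma secantE S x : secant_mult S x = (\sum_(l | inc x l) 'C(#|S :&: pts l|, 2))%N.
Proof. by []. Qed.

Lemma pencil_card (S : {set point F}) P :
  #|S| = ((P \in S) + \sum_(l | inc P l) #|(S :\ P) :&: pts l|)%N.
Proof.
rewrite (cardsD1 P S); congr (_ + _)%N.
rewrite -sum1_card.
transitivity (\sum_(y in S :\ P) \sum_(l | inc P l) (inc y l : nat))%N.
  apply: eq_bigr => y; rewrite !inE => /andP[yP _].
  rewrite (bigD1 (join P y)) /= ?join_incl // join_incr big1 // => l /andP[Pl lj].
  case yl: (inc y l) => //; move/eqP: lj => lj; exfalso; apply: lj.
  by apply: (join_uniq (x := P) (y := y)); rewrite 1?eq_sym ?join_incl ?join_incr.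
rewrite exchange_big; apply: eq_bigr => l _.
rewrite -sum1_card [RHS](eq_bigl (fun y => (y \in S :\ P) && inc y l)); last first.
  by move=> y; rewrite !inE.
by rewrite big_mkcondr; apply: eq_bigr => y _; case: (inc y l).
Qed.

Lemma spans_nc (S : {set point F}) a b c : a \in S -> b \in S -> c \in S ->
  (forall l, ~~ [&& inc a l, inc b l & inc c l]) -> spans S.
Proof.
move=> aS bS cS nc; rewrite /spans.
set M := (\sum_(p in S) <<val p>>)%MS.
have := rank_leq_col M; rewrite leq_eqVlt => /orP[//|lt].
have [l Hl] := exists_orth lt.
have sub : forall p, p \in S -> inc p l.
  move=> p pS; rewrite inc_mul.
  have : (val p <= M)%MS by apply: (sumsmx_sup p) => //; rewrite genmxE.
  by case/submxP => w ->; rewrite -mulmxA Hl mulmx0.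
by have := nc l; rewrite !sub.
Qed.

Lemma in_union (Ls : {set point F}) y :
  (y \in union_lines Ls) = [exists m in Ls, inc y m].
Proof.
apply/bigcupP/existsP => [[m mL]|[m /andP[mL ym]]].
  by rewrite inE => ym; exists m; rewrite mL.
by exists m; rewrite ?inE.
Qed.

Lemma cardDI (S B : {set point F}) P :
  #|(S :\ P) :&: B| = (#|S :&: B| - (P \in S :&: B))%N.
Proof.
rewrite (cardsD1 P (S :&: B)) addKn; apply: eq_card => y; rewrite !inE.
by rewrite andbA.
Qed.

Lemma union_meet (Ls : {set point F}) P l : (forall m, m \in Ls -> inc P m) ->
  ~~ inc P l -> #|union_lines Ls :&: pts l| = #|Ls|.
Proof.
move=> hP Pl.
have ml : forall m, m \in Ls -> m != l.
  by move=> m mL; apply: contraNneq Pl => <-; exact: hP.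
have -> : union_lines Ls :&: pts l = [set join m l | m in Ls].
  apply/setP => y; rewrite inE in_union inE; apply/andP/imsetP.
    case=> /existsP[m /andP[mL ym]] yl; exists m => //.
    by apply: (meet_uniq (ml m mL)); rewrite ?meet_incl ?meet_incr.
  case=> m mL ->; split; last exact: meet_incr.
  by apply/existsP; exists m; rewrite mL meet_incl.
rewrite card_in_imset // => m m' mL m'L E.
apply/eqP; apply: contraR Pl => mm'.
have -> : P = join m l.
  apply: (meet_uniq mm'); rewrite ?hP ?meet_incl //.
  by rewrite E meet_incl.
exact: meet_incr.
Qed.

Lemma union_through (Ls : {set point F}) P l m0 : (forall m, m \in Ls -> inc P m) ->
  m0 \in Ls -> inc P l -> l \notin Ls -> union_lines Ls :&: pts l = [set P].
Proof.
move=> hP m0L Pl lL; apply/setP => y; rewrite inE in_union !inE; apply/andP/eqP.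
  case=> /existsP[m /andP[mL ym]] yl.
  have ml : m != l by apply: contraNneq lL => <-.
  by apply: (meet_uniq ml) => //; apply: hP.
by move=> ->; split => //; apply/existsP; exists m0; rewrite m0L hP.
Qed.

Lemma point_off (P l : point F) : exists y, inc y l && (y != P).
Proof.
have : (0 < #|pts l :\ P|)%N.
  have := cardsD1 P (pts l); rewrite card_pts; have := q_gt1.
  move: #|pts l :\ P| #|F| => c q; case: (P \in pts l) => /=; lia.
by case/card_gt0P => y; rewrite !inE => /andP[a b]; exists y; rewrite a b.
Qed.

Lemma spans_two (S : {set point F}) P m1 m2 : m1 != m2 -> inc P m1 -> inc P m2 ->
  (forall y, inc y m1 -> y \in S) -> (forall y, inc y m2 -> y \in S) -> spans S.
Proof.
move=> m12 P1 P2 s1 s2.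
have [y /andP[y1 yP]] := point_off P m1.
have [z /andP[z2 zP]] := point_off P m2.
apply: (@spans_nc S P y z (s1 _ P1) (s1 _ y1) (s2 _ z2)) => n.
apply/negP => /and3P[Pn yn zn]; case/eqP: m12.
have e1 : n = m1 by apply: (join_uniq (x := P) (y := y)); rewrite // eq_sym.
have e2 : n = m2 by apply: (join_uniq (x := P) (y := z)); rewrite // eq_sym.
by rewrite -e1 -e2.
Qed.

Lemma two_in (Ls : {set point F}) : (2 <= #|Ls|)%N ->
  exists m1 m2, [/\ m1 \in Ls, m2 \in Ls & m1 != m2].
Proof.
move=> h; have [m1 m1L] : exists m1, m1 \in Ls.
  by apply/card_gt0P; exact: (leq_trans (isT : (0 < 2)%N) h).
have : (0 < #|Ls :\ m1|)%N.
  by have := cardsD1 m1 Ls; rewrite m1L; move: h; move: #|Ls| #|Ls :\ m1| => a b /=; lia.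
case/card_gt0P => m2; rewrite !inE => /andP[a b]; exists m1, m2; split => //.
by rewrite eq_sym.
Qed.

Lemma notT_card (S : {set point F}) : (#|S| < #|F| ^ 2 + #|F| + 1)%N ->
  S != [set: point F].
Proof. by move=> h; apply/negP => /eqP E; move: h; rewrite E card_points ltnn. Qed.

Lemma part1 P (Ls : {set point F}) L : (2 <= L <= #|F|)%N -> #|Ls| = L ->
  (forall l, l \in Ls -> inc P l) ->
  #|union_lines Ls| = (1 + L * #|F|)%N /\
  optimal_saturating ('C(L, 2) * #|F|)%N (union_lines Ls).
Proof.
move=> /andP[L2 Lq] cL hP.
set S := union_lines Ls; set q := #|F|.
have q1 := q_gt1.
have [m0 [m2 [m0L m2L m02]]] : exists m1 m2, [/\ m1 \in Ls, m2 \in Ls & m1 != m2].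
  by apply: two_in; rewrite cL.
have PS : P \in S by rewrite in_union; apply/existsP; exists m0; rewrite m0L hP.
have inS : forall l y, l \in Ls -> inc y l -> y \in S.
  by move=> l y lL yl; rewrite in_union; apply/existsP; exists l; rewrite lL.
have cS : #|S| = (1 + L * q)%N.
  rewrite (pencil_card S P) PS (@pencil_sum P Ls set0 q 0 0) //.
  all: try by move=> l; rewrite !inE.
  - by rewrite cL !muln0 !addn0.
  - move=> l lL /=; rewrite cardDI.
    have -> : S :&: pts l = pts l by apply/setIidPr/subsetP => y; rewrite inE; exact: inS.
    by rewrite card_pts inE (hP _ lL) /= subn1.
  - move=> l Pl lL _ /=; rewrite cardDI (union_through hP m0L Pl lL) cards1 inE eqxx.
    by rewrite subnn.
have sec : forall x, x \notin S -> secant_mult S x = ('C(L, 2) * q)%N.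
  move=> x xS.
  have xP : x != P by apply: contraNneq xS => ->.
  set n0 := join x P.
  have n0L : n0 \notin Ls by apply: contra xS => h; apply: (inS n0); rewrite // join_incl.
  rewrite secantE (@pencil_sum x [set n0] set0 'C(1, 2) 0 'C(L, 2)) //.
  all: try by move=> l; rewrite !inE.
  - by rewrite cards1 cards0 bin_small // subn0 mul0n muln0 subSS subn0 mulnC.
  - by move=> l; rewrite inE => /eqP ->; rewrite join_incl.
  - move=> l; rewrite inE => /eqP -> /=.
    by rewrite (union_through hP m0L (join_incr x P) n0L) cards1.
  - move=> l xl; rewrite inE => ln0 _ /=.
    have Pl : ~~ inc P l.
      apply: contra ln0 => Pl; apply/eqP.
      by apply: (join_uniq xP); rewrite ?join_incl ?join_incr.
    by rewrite (union_meet hP Pl) cL.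
split => //; split; last exact: sec.
split.
- by apply: (spans_two m02 (hP _ m0L) (hP _ m2L)) => y; apply: inS.
- apply: notT_card; rewrite cS; nia.
- by move=> x xS; rewrite sec.
Qed.

Lemma part2 G (Ls : {set point F}) m (B : {set point F}) b :
  #|Ls| = #|F| -> (forall l, l \in Ls -> inc G l) ->
  inc G m -> m \notin Ls ->
  B \subset pts m -> G \notin B -> #|B| = b -> (1 <= b <= #|F| - 1)%N ->
  #|union_lines Ls :|: B| = (1 + #|F| ^ 2 + b)%N /\
  optimal_saturating ('C(b.+1, 2) + 'C(#|F|, 2) * #|F|)%N (union_lines Ls :|: B).
Proof.
move=> cL hP Gm mL /subsetP Bm GB cB /andP[b1 bq].
set U := union_lines Ls; set S := U :|: B; set q := #|F|.
have q1 := q_gt1.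
have [m0 [m2 [m0L m2L m02]]] : exists m1 m2, [/\ m1 \in Ls, m2 \in Ls & m1 != m2].
  by apply: two_in; rewrite cL.
have inU : forall l y, l \in Ls -> inc y l -> y \in U.
  by move=> l y lL yl; rewrite in_union; apply/existsP; exists l; rewrite lL.
have inS : forall l y, l \in Ls -> inc y l -> y \in S.
  by move=> l y lL yl; rewrite inE (inU l).
have BS : forall y, y \in B -> y \in S by move=> y yB; rewrite inE yB orbT.
have GS : G \in S by apply: (inS m0) => //; apply: hP.
have pen : forall l, inc G l -> (l \in Ls) || (l == m).
  have sub : m |: Ls \subset [set l | inc G l].
    by apply/subsetP => l; rewrite !inE => /orP[/eqP ->|/hP].
  have : m |: Ls == [set l | inc G l].
    rewrite eqEcard sub card_pencil cardsU1 mL cL /=.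
    by move: (#|F|) => n; rewrite add1n.
  move=> /eqP E l Gl; have : l \in [set l | inc G l] by rewrite inE.
  by rewrite -E !inE orbC.
have Um : U :&: pts m = [set G] by apply: (union_through hP m0L).
have SIm : S :&: pts m = G |: B.
  rewrite setIUl Um; congr (_ :|: _); apply/setIidPl/subsetP => y yB.
  exact: Bm.
have cGB : #|G |: B| = b.+1 by rewrite cardsU1 GB cB.
have cS : #|S| = (1 + q ^ 2 + b)%N.
  rewrite (pencil_card S G) GS (@pencil_sum G Ls [set m] q b 0) //.
  all: try by move=> l; rewrite !inE.
  - by rewrite cL cards1 !muln0 !addn0 mul1n expnS expn1 addnA.
  - by move=> l; rewrite inE => /eqP ->.
  - by move=> l lL; rewrite inE; apply: contraNneq mL => <-.
  - move=> l lL /=; rewrite cardDI.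
    have -> : S :&: pts l = pts l by apply/setIidPr/subsetP => y; rewrite inE; exact: inS.
    by rewrite card_pts inE (hP _ lL) /= subn1.
  - move=> l; rewrite inE => /eqP -> /=; rewrite cardDI SIm cGB.
    by rewrite !inE eqxx /= subn1.
  - move=> l Gl lL; rewrite inE => lm; exfalso.
    by move: (pen l Gl); rewrite (negbTE lL) (negbTE lm).
have sec : forall x, x \notin S -> secant_mult S x = ('C(b.+1, 2) + 'C(q, 2) * q)%N.
  move=> x xS.
  have xG : G != x by apply: contraNneq xS => <-.
  have xm : inc x m.
    have := pen _ (join_incl G x); case/orP => [jL|/eqP <-]; last exact: join_incr.
    by move: xS; rewrite (inS _ x jL (join_incr G x)).
  rewrite secantE (@pencil_sum x [set m] set0 'C(b.+1, 2) 0 'C(q, 2)) //.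
  all: try by move=> l; rewrite !inE.
  - rewrite cards1 cards0 !muln0 mul1n addn0 subn0 subSS subn0 mulnC.
    by [].
  - by move=> l; rewrite inE => /eqP ->.
  - by move=> l; rewrite inE => /eqP -> /=; rewrite SIm cGB.
  - move=> l xl; rewrite inE => lm _ /=.
    have Gl : ~~ inc G l.
      apply: contra lm => Gl; apply/eqP.
      by apply: (join_uniq xG).
    have -> : S :&: pts l = U :&: pts l.
      rewrite setIUl; apply/setUidPl/subsetP => y; rewrite !inE => /andP[yB yl].
      have yx : y = x by apply: (meet_uniq lm) => //; have := Bm y yB; rewrite inE.
      by move: xS; rewrite -yx BS.
    by rewrite (union_meet hP Gl) cL.
split => //; split; last exact: sec.
split.
- by apply: (spans_two m02 (hP _ m0L) (hP _ m2L)) => y; apply: inS.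
- apply: notT_card; rewrite cS; move: bq; rewrite /q; move: #|F| => n; lia.
- by move=> x xS; rewrite sec.
Qed.

Lemma card3 (a b c : point F) : a != b -> a != c -> b != c -> #|[set a; b; c]| = 3%N.
Proof.
move=> ab ac bc; rewrite -setUA cardsU1 cards2 bc !inE negb_or ab ac.
by [].
Qed.

Lemma nc_off l1 l2 l3 : nonconcurrent l1 l2 l3 -> ~~ inc (join l1 l2) l3.
Proof.
move=> nc; apply/negP => h; apply: nc; exists (join l1 l2).
by rewrite meet_incl meet_incr h.
Qed.

Lemma nc_neq l1 l2 l3 : nonconcurrent l1 l2 l3 -> l1 != l2.
Proof.
move=> nc; apply/eqP => e; apply: nc; exists (join l1 l3); subst.
by rewrite meet_incl meet_incr.
Qed.

Lemma nc_12 l1 l2 l3 : nonconcurrent l1 l2 l3 -> nonconcurrent l2 l1 l3.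
Proof.
move=> nc [x /and3P[a b c]]; apply: nc; exists x; by rewrite a b c.
Qed.

Lemma nc_23 l1 l2 l3 : nonconcurrent l1 l2 l3 -> nonconcurrent l1 l3 l2.
Proof.
move=> nc [x /and3P[a b c]]; apply: nc; exists x; by rewrite a b c.
Qed.

Lemma tri_12 l1 l2 l3 : triangle l1 l2 l3 = triangle l2 l1 l3.
Proof.
apply/setP => y; rewrite !inE.
by case: (inc y l1); case: (inc y l2); case: (inc y l3).
Qed.

Lemma tri_23 l1 l2 l3 : triangle l1 l2 l3 = triangle l1 l3 l2.
Proof.
apply/setP => y; rewrite !inE.
by case: (inc y l1); case: (inc y l2); case: (inc y l3).
Qed.

Lemma vt_12 l1 l2 l3 : vertexless_triangle l1 l2 l3 = vertexless_triangle l2 l1 l3.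
Proof.
apply/setP => y; rewrite !inE.
by case: (inc y l1); case: (inc y l2); case: (inc y l3).
Qed.

Lemma vt_23 l1 l2 l3 : vertexless_triangle l1 l2 l3 = vertexless_triangle l1 l3 l2.
Proof.
apply/setP => y; rewrite !inE.
by case: (inc y l1); case: (inc y l2); case: (inc y l3).
Qed.

Lemma in_tri l1 l2 l3 y : (y \in triangle l1 l2 l3) = [|| inc y l1, inc y l2 | inc y l3].
Proof. by rewrite !inE orbA. Qed.

Lemma tri_cnt2 l1 l2 l3 l : nonconcurrent l1 l2 l3 -> inc (join l1 l2) l ->
  l != l1 -> l != l2 -> #|triangle l1 l2 l3 :&: pts l| = 2%N.
Proof.
move=> nc Vl l1l l2l.
have V3 := nc_off nc.
have l3l : l != l3 by apply: contraNneq V3 => <-.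
have -> : triangle l1 l2 l3 :&: pts l = [set join l1 l2; join l l3].
  apply/setP => y; rewrite inE in_tri !inE; apply/andP/orP.
    case=> /or3P[y1|y2|y3] yl.
    - by left; apply/eqP; apply: (meet_uniq l1l); rewrite ?meet_incl ?meet_incr.
    - by left; apply/eqP; apply: (meet_uniq l2l); rewrite ?meet_incl ?meet_incr.
    - by right; apply/eqP; apply: (meet_uniq l3l); rewrite ?meet_incl ?meet_incr.
  case=> /eqP ->; split => //; first by rewrite meet_incl.
  + by rewrite meet_incr !orbT.
  + exact: meet_incl.
rewrite cards2; suff -> : join l1 l2 != join l l3 by [].
apply: contraNneq V3 => ->; exact: meet_incr.
Qed.

Lemma tri_cnt3 l1 l2 l3 l : nonconcurrent l1 l2 l3 ->
  ~~ inc (join l1 l2) l -> ~~ inc (join l1 l3) l -> ~~ inc (join l2 l3) l ->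
  l != l1 -> l != l2 -> l != l3 -> #|triangle l1 l2 l3 :&: pts l| = 3%N.
Proof.
move=> nc V12 V13 V23 l1l l2l l3l.
have n12 := nc_neq nc; have n13 := nc_neq (nc_23 nc).
have n23 := nc_neq (nc_23 (nc_12 nc)).
have -> : triangle l1 l2 l3 :&: pts l = [set join l l1; join l l2; join l l3].
  apply/setP => y; rewrite inE in_tri !inE -orbA; apply/andP/or3P.
    case=> /or3P[y1|y2|y3] yl.
    - by constructor 1; apply/eqP; apply: (meet_uniq l1l); rewrite ?meet_incl ?meet_incr.
    - by constructor 2; apply/eqP; apply: (meet_uniq l2l); rewrite ?meet_incl ?meet_incr.
    - by constructor 3; apply/eqP; apply: (meet_uniq l3l); rewrite ?meet_incl ?meet_incr.
  by case=> /eqP ->; rewrite meet_incl meet_incr ?orbT.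
apply: card3.
- apply: contraNneq V12 => e.
  have -> : join l1 l2 = join l l1.
    by apply: (meet_uniq n12); rewrite ?meet_incl ?meet_incr // e meet_incr.
  exact: meet_incl.
- apply: contraNneq V13 => e.
  have -> : join l1 l3 = join l l1.
    by apply: (meet_uniq n13); rewrite ?meet_incl ?meet_incr // e meet_incr.
  exact: meet_incl.
- apply: contraNneq V23 => e.
  have -> : join l2 l3 = join l l2.
    by apply: (meet_uniq n23); rewrite ?meet_incl ?meet_incr // e meet_incr.
  exact: meet_incl.
Qed.

Lemma part3 l1 l2 l3 : nonconcurrent l1 l2 l3 ->
  #|triangle l1 l2 l3| = (3 * #|F|)%N /\
  optimal_saturating (3 * (#|F| - 1))%N (triangle l1 l2 l3).
Proof.
move=> nc; set T := triangle l1 l2 l3; set q := #|F|.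
have q1 := q_gt1.
have n12 := nc_neq nc; have n13 := nc_neq (nc_23 nc).
have n23 := nc_neq (nc_23 (nc_12 nc)).
have V12_3 := nc_off nc; have V13_2 := nc_off (nc_23 nc).
have V23_1 := nc_off (nc_23 (nc_12 nc)).
set V12 := join l1 l2 in V12_3 *; set V13 := join l1 l3 in V13_2 *.
set V23 := join l2 l3 in V23_1 *.
have inT1 : forall y, inc y l1 -> y \in T by move=> y h; rewrite in_tri h.
have inT2 : forall y, inc y l2 -> y \in T by move=> y h; rewrite in_tri h orbT.
have inT3 : forall y, inc y l3 -> y \in T by move=> y h; rewrite in_tri h !orbT.
have V12T : V12 \in T by apply: inT1; exact: meet_incl.
have cS : #|T| = (3 * q)%N.
  rewrite (pencil_card T V12) V12T (@pencil_sum V12 [set l1; l2] set0 q 0 1) //.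
  all: try by move=> l; rewrite !inE.
  - rewrite cards2 n12 cards0 /= !muln0 addn0 subn0 muln1.
    by rewrite /q; move: #|F| q1 => n q1'; clear -q1'; lia.
  - by move=> l; rewrite !inE => /orP[/eqP ->|/eqP ->]; rewrite ?meet_incl ?meet_incr.
  - move=> l; rewrite !inE => /orP[/eqP ->|/eqP ->] /=; rewrite cardDI.
    + have -> : T :&: pts l1 = pts l1 by apply/setIidPr/subsetP => y; rewrite inE; exact: inT1.
      by rewrite card_pts inE meet_incl /= subn1.
    + have -> : T :&: pts l2 = pts l2 by apply/setIidPr/subsetP => y; rewrite inE; exact: inT2.
      by rewrite card_pts inE meet_incr /= subn1.
  - move=> l Vl; rewrite !inE negb_or => /andP[l1l l2l] _ /=.
    rewrite cardDI (tri_cnt2 nc Vl l1l l2l) inE V12T inE Vl.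
    by [].
have sec : forall x, x \notin T -> secant_mult T x = (3 * (q - 1))%N.
  move=> x xT.
  have x1 : ~~ inc x l1 by apply: contra xT; exact: inT1.
  have x2 : ~~ inc x l2 by apply: contra xT; exact: inT2.
  have x3 : ~~ inc x l3 by apply: contra xT; exact: inT3.
  have ne1 : forall l, inc x l -> l != l1 by move=> l xl; apply: contraNneq x1 => <-.
  have ne2 : forall l, inc x l -> l != l2 by move=> l xl; apply: contraNneq x2 => <-.
  have ne3 : forall l, inc x l -> l != l3 by move=> l xl; apply: contraNneq x3 => <-.
  have xV12 : x != V12 by apply: contraNneq xT => ->.
  have xV13 : x != V13 by apply: contraNneq xT => ->; apply: inT1; exact: meet_incl.
  have xV23 : x != V23 by apply: contraNneq xT => ->; apply: inT2; exact: meet_incl.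
  set a3 := join x V12; set a2 := join x V13; set a1 := join x V23.
  have two : forall n y z li, inc x n -> inc y n -> inc z n -> inc y li -> inc z li ->
      y != z -> inc x li.
    move=> n y z li xn yn zn yl zl yz; have e : n = li by apply: (join_uniq yz).
    by rewrite -e.
  have V1213 : V12 != V13 by apply: contraNneq V12_3 => ->; exact: meet_incr.
  have V1223 : V12 != V23 by apply: contraNneq V12_3 => ->; exact: meet_incr.
  have V1323 : V13 != V23 by apply: contraNneq V13_2 => ->; exact: meet_incl.
  have a32 : a3 != a2.
    apply/eqP => e; have := two a3 V12 V13 l1 (join_incl _ _) (join_incr _ _).
    rewrite e join_incr meet_incl meet_incl V1213 => /(_ isT isT isT isT) h.
    by rewrite h in x1.
  have a31 : a3 != a1.
    apply/eqP => e; have := two a3 V12 V23 l2 (join_incl _ _) (join_incr _ _).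
    rewrite e join_incr meet_incr meet_incl V1223 => /(_ isT isT isT isT) h.
    by rewrite h in x2.
  have a21 : a2 != a1.
    apply/eqP => e; have := two a2 V13 V23 l3 (join_incl _ _) (join_incr _ _).
    rewrite e join_incr meet_incr meet_incr V1323 => /(_ isT isT isT isT) h.
    by rewrite h in x3.
  rewrite secantE (@pencil_sum x [set a1; a2; a3] set0 1 0 3) //.
  all: try by move=> l; rewrite !inE.
  - rewrite (@card3 a1 a2 a3); [|by rewrite eq_sym|by rewrite eq_sym|by rewrite eq_sym].
    rewrite cards0 /= !muln0 addn0 subn0.
    by rewrite /q; move: #|F| q1 => n q1'; clear -q1'; lia.
  - by move=> l; rewrite !inE -orbA => /or3P[] /eqP ->; exact: join_incl.
  - move=> l; rewrite !inE -orbA => /or3P[] /eqP -> /=.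
    + by rewrite /T tri_12 tri_23 (@tri_cnt2 l2 l3 l1 a1 (nc_23 (nc_12 nc)) (join_incr _ _)
        (ne2 _ (join_incl _ _)) (ne3 _ (join_incl _ _))).
    + by rewrite /T tri_23 (@tri_cnt2 l1 l3 l2 a2 (nc_23 nc) (join_incr _ _)
        (ne1 _ (join_incl _ _)) (ne3 _ (join_incl _ _))).
    + by rewrite /T (@tri_cnt2 l1 l2 l3 a3 nc (join_incr _ _)
        (ne1 _ (join_incl _ _)) (ne2 _ (join_incl _ _))).
  - move=> l xl; rewrite !inE -!orbA negb_or => /andP[la1 /norP[la2 la3]] _ /=.
    rewrite (@tri_cnt3 l1 l2 l3 l nc) ?ne1 ?ne2 ?ne3 //.
    + apply: contra la3 => Vl; apply/eqP.
      by apply: (join_uniq xV12); rewrite ?join_incl ?join_incr.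
    + apply: contra la2 => Vl; apply/eqP.
      by apply: (join_uniq xV13); rewrite ?join_incl ?join_incr.
    + apply: contra la1 => Vl; apply/eqP.
      by apply: (join_uniq xV23); rewrite ?join_incl ?join_incr.
split => //; split; last exact: sec.
split.
- apply: (spans_two n12 (meet_incl l1 l2) (meet_incr l1 l2)); [exact: inT1|exact: inT2].
- apply: notT_card; rewrite cS /q; move: #|F| q1 => n q1'; clear -q1'; nia.
- by move=> x xS; rewrite sec.
Qed.

Lemma in_vt l1 l2 l3 y : (y \in vertexless_triangle l1 l2 l3) =
  [|| inc y l1, inc y l2 | inc y l3] &&
  ~~ [|| inc y l1 && inc y l2, inc y l1 && inc y l3 | inc y l2 && inc y l3].
Proof.
rewrite !inE.
by case: (inc y l1); case: (inc y l2); case: (inc y l3).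
Qed.

Lemma part4_sec l1 l2 l3 x : nonconcurrent l1 l2 l3 ->
  inc x l1 -> ~~ inc x l2 -> ~~ inc x l3 ->
  secant_mult (~: vertexless_triangle l1 l2 l3) x =
    (1 + 'C(#|F|, 2) + (#|F| - 1) * 'C(#|F| - 2, 2))%N.
Proof.
move=> nc x1 x2 x3.
set VT := vertexless_triangle l1 l2 l3; set S := ~: VT.
have n12 := nc_neq nc; have n13 := nc_neq (nc_23 nc).
have n23 := nc_neq (nc_23 (nc_12 nc)).
have V12_3 := nc_off nc; have V13_2 := nc_off (nc_23 nc).
have V23_1 := nc_off (nc_23 (nc_12 nc)).
set V12 := join l1 l2 in V12_3 *; set V13 := join l1 l3 in V13_2 *.
set V23 := join l2 l3 in V23_1 *.
have xV : x \in VT by rewrite in_vt x1 (negbTE x2) (negbTE x3).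
have xV23 : x != V23 by apply: contraNneq V23_1 => <-.
set a := join x V23.
have a1 : a != l1 by apply: contraNneq V23_1 => <-; exact: join_incr.
have a2 : a != l2 by apply: contraNneq x2 => <-; exact: join_incl.
have a3 : a != l3 by apply: contraNneq x3 => <-; exact: join_incl.
have ne1 : forall l, inc x l -> l != l2 by move=> l xl; apply: contraNneq x2 => <-.
have ne3 : forall l, inc x l -> l != l3 by move=> l xl; apply: contraNneq x3 => <-.
have V23_2 : inc V23 l2 := meet_incl l2 l3.
have V23_3 : inc V23 l3 := meet_incr l2 l3.
rewrite secantE (@pencil_sum x [set l1] [set a] 'C(2, 2) 'C(#|F|, 2) 'C(#|F| - 2, 2)).
- rewrite !cards1 !mul1n; congr (_ + _ + _)%N; congr (_ * _)%N.
  by rewrite -subnDA addn1 subSS.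
- by move=> l; rewrite inE => /eqP ->.
- by move=> l; rewrite inE => /eqP ->; exact: join_incl.
- by move=> l; rewrite !inE => /eqP ->; rewrite eq_sym.
- move=> l; rewrite inE => /eqP -> /=; congr 'C(_, 2).
  have -> : S :&: pts l1 = [set V12; V13].
    apply/setP => y; rewrite !inE; apply/andP/orP.
      case=> h y1; rewrite y1 /= andbT negbK in h.
      case/orP: h => [/orP[y2|y3]|/andP[y2 y3]].
      + by left; apply/eqP; apply: (meet_uniq n12); rewrite ?meet_incl ?meet_incr.
      + by right; apply/eqP; apply: (meet_uniq n13); rewrite ?meet_incl ?meet_incr.
      + have e : y = V23 by apply: (meet_uniq n23).
        by move: V23_1; rewrite -e y1.
    by case=> /eqP ->; split; rewrite ?meet_incl ?meet_incr /= ?orbT.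
  rewrite cards2; suff -> : V12 != V13 by [].
  by apply: contraNneq V12_3 => ->; exact: meet_incr.
- move=> l; rewrite inE => /eqP -> /=; congr 'C(_, 2).
  have VTa : forall y, inc y a -> (y \in VT) = (y == x).
    move=> y ya; apply/idP/eqP => [|->]; last exact: xV.
    rewrite /VT in_vt => /andP[/or3P[y1|y2|y3] nv].
    + by apply: (meet_uniq a1) => //; exact: join_incl.
    + have e : y = V23 by apply: (meet_uniq a2) => //; exact: join_incr.
      by move: nv; rewrite e V23_2 V23_3 !andbT !orbT.
    + have e : y = V23 by apply: (meet_uniq a3) => //; exact: join_incr.
      by move: nv; rewrite e V23_2 V23_3 !andbT !orbT.
  have -> : S :&: pts a = pts a :\ x.
    apply/setP => y; rewrite in_setI in_setC in_setD1 [y \in pts _]inE.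
    by case ya: (inc y a); rewrite ?andbF ?andbT // VTa.
  have := cardsD1 x (pts a); rewrite card_pts inE join_incl add1n => /eqP.
  by rewrite eqSS => /eqP ->.
- move=> l xl; rewrite !inE => l1l lal /=; congr 'C(_, 2).
  set t2 := join l l2; set t3 := join l l3.
  have V23l : ~~ inc V23 l.
    by apply: contra lal => h; apply/eqP; apply: (join_uniq xV23); rewrite ?join_incl ?join_incr.
  have on1 : forall y, inc y l -> inc y l1 -> y = x.
    by move=> y yl y1; apply: (meet_uniq l1l).
  have t2l : inc t2 l := meet_incl l l2.
  have t3l : inc t3 l := meet_incl l l3.
  have t22 : inc t2 l2 := meet_incr l l2.
  have t33 : inc t3 l3 := meet_incr l l3.
  have t21 : ~~ inc t2 l1 by apply/negP => h; move: x2; rewrite -(on1 t2 t2l h) t22.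
  have t31 : ~~ inc t3 l1 by apply/negP => h; move: x3; rewrite -(on1 t3 t3l h) t33.
  have t23 : ~~ inc t2 l3.
    apply/negP => h; have e : t2 = V23 by apply: (meet_uniq n23).
    by move: V23l; rewrite -e t2l.
  have t32 : ~~ inc t3 l2.
    apply/negP => h; have e : t3 = V23 by apply: (meet_uniq n23).
    by move: V23l; rewrite -e t3l.
  have VTl : forall y, inc y l -> (y \in VT) = [|| y == x, y == t2 | y == t3].
    move=> y yl; apply/idP/or3P.
      rewrite /VT in_vt => /andP[/or3P[y1|y2|y3] _].
      + by constructor 1; apply/eqP; apply: on1.
      + by constructor 2; apply/eqP; apply: (meet_uniq (ne1 _ xl)).
      + by constructor 3; apply/eqP; apply: (meet_uniq (ne3 _ xl)).
    case=> /eqP ->; first exact: xV.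
    + by rewrite /VT in_vt t22 (negbTE t21) (negbTE t23) !orbT.
    + by rewrite /VT in_vt t33 (negbTE t31) (negbTE t32) !orbT.
  have -> : S :&: pts l = pts l :\: [set x; t2; t3].
    apply/setP => y; rewrite in_setI in_setC in_setD [y \in pts _]inE.
    case yl: (inc y l); rewrite ?andbF ?andbT // VTl //.
    by rewrite !inE -orbA.
  rewrite cardsD card_pts.
  have -> : pts l :&: [set x; t2; t3] = [set x; t2; t3].
    apply/setIidPr/subsetP => y; rewrite !inE -orbA.
    by case/or3P => /eqP ->.
  rewrite card3.
  + by rewrite subSS; move: #|F| => n; clear; lia.
  + by apply: contraNneq x2 => ->.
  + by apply: contraNneq x3 => ->.
  + by apply: contraNneq t23 => ->.
Qed.

Lemma part4 l1 l2 l3 : nonconcurrent l1 l2 l3 ->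
  #|~: vertexless_triangle l1 l2 l3| = (#|F| ^ 2 - 2 * #|F| + 4)%N /\
  optimal_saturating (1 + 'C(#|F|, 2) + (#|F| - 1) * 'C(#|F| - 2, 2))%N
    (~: vertexless_triangle l1 l2 l3).
Proof.
move=> nc.
have n12 := nc_neq nc; have n13 := nc_neq (nc_23 nc).
have n23 := nc_neq (nc_23 (nc_12 nc)).
have V12_3 := nc_off nc; have V13_2 := nc_off (nc_23 nc).
have V23_1 := nc_off (nc_23 (nc_12 nc)).
set V12 := join l1 l2 in V12_3 *; set V13 := join l1 l3 in V13_2 *.
set V23 := join l2 l3 in V23_1 *.
have d1 : V12 != V13 by apply: contraNneq V12_3 => ->; exact: meet_incr.
have d2 : V12 != V23 by apply: contraNneq V12_3 => ->; exact: meet_incr.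
have d3 : V13 != V23 by apply: contraNneq V13_2 => ->; exact: meet_incl.
have sec : forall x, x \notin ~: vertexless_triangle l1 l2 l3 ->
    secant_mult (~: vertexless_triangle l1 l2 l3) x =
    (1 + 'C(#|F|, 2) + (#|F| - 1) * 'C(#|F| - 2, 2))%N.
  move=> x; rewrite in_setC negbK => xV; move: (xV); rewrite in_vt.
  case/andP => /or3P[x1|x2|x3] nv.
  - apply: part4_sec => //; apply/negP => h; move: nv; by rewrite x1 h /= ?orbT.
  - rewrite vt_12; apply: (part4_sec (nc_12 nc) x2 _ _).
    + by apply/negP => h; move: nv; rewrite x2 h /= ?orbT.
    + by apply/negP => h; move: nv; rewrite x2 h /= ?orbT.
  - rewrite vt_23 vt_12; apply: (part4_sec (nc_12 (nc_23 nc)) x3 _ _).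
    + by apply/negP => h; move: nv; rewrite x3 h /= ?orbT.
    + by apply/negP => h; move: nv; rewrite x3 h /= ?orbT.
have VTc : #|vertexless_triangle l1 l2 l3| = (3 * #|F| - 3)%N.
  rewrite /vertexless_triangle cardsD.
  have -> : triangle l1 l2 l3 :&: ((pts l1 :&: pts l2) :|: (pts l1 :&: pts l3)
      :|: (pts l2 :&: pts l3)) = [set V12; V13; V23].
    apply/setP => y; rewrite !inE; apply/idP/idP.
    - case/andP => _ /orP[/orP[/andP[y1 y2]|/andP[y1 y3]]|/andP[y2 y3]].
      + by rewrite (meet_uniq n12 y1 y2 (meet_incl _ _) (meet_incr _ _)) eqxx.
      + by rewrite (meet_uniq n13 y1 y3 (meet_incl _ _) (meet_incr _ _)) eqxx orbT.
      + by rewrite (meet_uniq n23 y2 y3 (meet_incl _ _) (meet_incr _ _)) eqxx !orbT.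
    - rewrite -orbA => /or3P[] /eqP ->; by rewrite ?meet_incl ?meet_incr /= ?orbT ?andbT.
  by rewrite card3 // (proj1 (part3 nc)).
have q1 := q_gt1.
have cS : #|~: vertexless_triangle l1 l2 l3| = (#|F| ^ 2 - 2 * #|F| + 4)%N.
  have := cardsCs (~: vertexless_triangle l1 l2 l3); rewrite setCK VTc => ->.
  have := card_points; rewrite cardsT => ->.
  by move: #|F| q1 => n q1'; clear -q1'; rewrite !expnS expn0 muln1; nia.
split => //; split; last exact: sec.
have notV : forall w, w \in [set V12; V13; V23] -> w \in ~: vertexless_triangle l1 l2 l3.
  move=> w; rewrite in_setC in_vt !inE -orbA => /or3P[] /eqP ->;
    by rewrite ?meet_incl ?meet_incr /= ?orbT ?andbF ?andbT.
split.
- apply: (@spans_nc _ V12 V13 V23); try (apply: notV; by rewrite !inE eqxx ?orbT).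
  move=> n; apply/negP => /and3P[a b c].
  have e : n = l1 by apply: (join_uniq d1); rewrite ?meet_incl.
  by move: V23_1; rewrite -e c.
- apply: notT_card; rewrite cS; move: #|F| q1 => n q1'; clear -q1'.
  rewrite !expnS expn0 muln1; nia.
- by move=> x xS; rewrite sec.
Qed.
End Geo.

Unset Implicit Arguments.
Local Close Scope ring_scope.

Theorem theorem7p3 (F : finFieldType) :
  let q := #|F| in
  (* (i) L distinct concurrent lines, 2 <= L <= q *)
  (forall (P : point F) (Ls : {set line F}) (L : nat),
      (2 <= L <= q)%N -> #|Ls| = L -> (forall l, l \in Ls -> inc P l) ->
      #|union_lines Ls| = (1 + L * q)%N /\
      optimal_saturating ('C(L, 2) * q)%N (union_lines Ls)) /\
  (* (ii) q lines through G plus b points (other than G) of the remaining line m *)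
  (forall (G : point F) (Ls : {set line F}) (m : line F) (B : {set point F}) (b : nat),
      #|Ls| = q -> (forall l, l \in Ls -> inc G l) ->
      inc G m -> m \notin Ls ->
      B \subset pts m -> G \notin B -> #|B| = b -> (1 <= b <= q - 1)%N ->
      #|union_lines Ls :|: B| = (1 + q ^ 2 + b)%N /\
      optimal_saturating ('C(b.+1, 2) + 'C(q, 2) * q)%N (union_lines Ls :|: B)) /\
  (* (iii) triangle *)
  (forall l1 l2 l3 : line F, nonconcurrent l1 l2 l3 ->
      #|triangle l1 l2 l3| = (3 * q)%N /\
      optimal_saturating (3 * (q - 1))%N (triangle l1 l2 l3)) /\
  (* (iv) complement of a vertex-less triangle *)
  (forall l1 l2 l3 : line F, nonconcurrent l1 l2 l3 ->
      #|~: vertexless_triangle l1 l2 l3| = (q ^ 2 - 2 * q + 4)%N /\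
      optimal_saturating (1 + 'C(q, 2) + (q - 1) * 'C(q - 2, 2))%N
        (~: vertexless_triangle l1 l2 l3)).
Proof.
move=> q; split; [|split; [|split]].
- move=> P Ls L hL cL hP; exact: (part1 hL cL hP).
- move=> G Ls m B b cL hG Gm mL Bm GB cB hb; exact: (part2 cL hG Gm mL Bm GB cB hb).
- move=> l1 l2 l3 nc; exact: (part3 nc).
- move=> l1 l2 l3 nc; exact: (part4 nc).
Qed.
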